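(* Let $S\subset\mathbb{R}^n$ be an $r$-dimensional subspace, let $U$ be an $n\times r$ matrix whose columns form an orthonormal basis of $S$, let $y\in S^\perp$ be nonzero, let $\Omega=(\Omega(1),\dots,\Omega(m))$ be $m$ indices drawn independently and uniformly at random from $\{1,\dots,n\}$ (with replacement), let $\delta>0$ and $\beta=\sqrt{2\mu(y)\log(\frac1\delta)}$. Then with probability at least $1-\delta$, $$\|U_\Omega^Ty_\Omega\|_2^2\ \le\ (1+\beta)^2\,\frac{m}{n}\,\frac{r\mu(S)}{n}\,\|y\|_2^2 .$$
   Context: For a sample sequence $\Omega=(\Omega(1),\dots,\Omega(m))$ of indices in $\{1,\dots,n\}$, $y_\Omega\in\mathbb{R}^m$ is the vector with entries $y_{\Omega(i)}$, and $U_\Omega$ is the $m\times r$ matrix whose $i$-th row is the $\Omega(i)$-th row of $U$. $P_S$ is the orthogonal projection onto $S$; the coherence of $S$ is $\mu(S):=\frac{n}{r}\max_j\|P_Se_j\|_2^2$ with $e_j$ the standard basis vectors. For a nonzero vector $z\in\mathbb{R}^n$, $\mu(z)=\frac{n\|z\|_\infty^2}{\|z\|_2^2}$. *)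

(* Defs.v *)
From Stdlib Require Import Reals.
From mathcomp Require Import all_boot.
Set Implicit Arguments. Unset Strict Implicit. Unset Printing Implicit Defensive.

Local Open Scope R_scope.

Definition rsum (k : nat) (f : 'I_k -> R) : R := \big[Rplus/0]_(i < k) f i.

Definition sqnorm (k : nat) (x : 'I_k -> R) : R := rsum (fun i => x i * x i).

Definition infnorm (k : nat) (x : 'I_k -> R) : R := \big[Rmax/0]_(i < k) Rabs (x i).

Definition orthonormal_cols (n r : nat) (U : 'I_n -> 'I_r -> R) : Prop :=
  forall a b : 'I_r, rsum (fun i => U i a * U i b) = if a == b then 1 else 0.

Definition in_perp (n r : nat) (U : 'I_n -> 'I_r -> R) (y : 'I_n -> R) : Prop :=
  forall a : 'I_r, rsum (fun i => U i a * y i) = 0.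

(* orthogonal projection onto S = range U (U orthonormal): P_S x = U (U^T x) *)
Definition projS (n r : nat) (U : 'I_n -> 'I_r -> R) (x : 'I_n -> R) : 'I_n -> R :=
  fun i => rsum (fun a => U i a * rsum (fun k => U k a * x k)).

Definition e_vec (n : nat) (j : 'I_n) : 'I_n -> R :=
  fun i => if i == j then 1 else 0.

Definition coherence (n r : nat) (U : 'I_n -> 'I_r -> R) : R :=
  INR n / INR r * \big[Rmax/0]_(j < n) sqnorm (projS U (e_vec j)).

Definition vec_coherence (n : nat) (z : 'I_n -> R) : R :=
  INR n * (infnorm z) ^ 2 / sqnorm z.

(* || U_Omega^T y_Omega ||_2^2 for a sample sequence Omega of length m *)
Definition sampled_sqnorm (n r m : nat) (U : 'I_n -> 'I_r -> R) (y : 'I_n -> R)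
  (Om : {ffun 'I_m -> 'I_n}) : R :=
  sqnorm (fun a : 'I_r => rsum (fun i : 'I_m => U (Om i) a * y (Om i))).

Definition Rleb (x y : R) : bool := if Rle_dec x y then true else false.

(* probability under m i.i.d. uniform draws from {1..n} (with replacement):
   the uniform measure on the n^m sequences Omega *)
Definition prob_Omega (n m : nat) (E : {ffun 'I_m -> 'I_n} -> bool) : R :=
  INR #|[set Om : {ffun 'I_m -> 'I_n} | E Om]| / INR (n ^ m).

(* Main.v *)
Require Import Defs.
From Stdlib Require Import Reals.
From mathcomp Require Import all_boot.
From HB Require Import structures.
From Stdlib Require Import Lra Lia Psatz FunctionalExtensionality Classical.
Set Warnings "-notation-overridden".
Local Open Scope R_scope.

Lemma Rplus_assoc' : associative Rplus. Proof. move=> x y z; ring. Qed.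
Lemma Rplus_left_id : left_id 0 Rplus. Proof. move=> x; ring. Qed.
Lemma Rmult_left_id : left_id 1 Rmult. Proof. move=> x; ring. Qed.
HB.instance Definition _ := Monoid.isComLaw.Build R 0 Rplus Rplus_assoc' Rplus_comm Rplus_left_id.
Lemma Rmult_assoc' : associative Rmult. Proof. move=> x y z; ring. Qed.
HB.instance Definition _ := Monoid.isComLaw.Build R 1 Rmult Rmult_assoc' Rmult_comm Rmult_left_id.
Lemma R0ml : left_zero 0 Rmult. Proof. move=> x; ring. Qed.
Lemma R0mr : right_zero 0 Rmult. Proof. move=> x; ring. Qed.
HB.instance Definition _ := Monoid.isMulLaw.Build R 0 Rmult R0ml R0mr.
Lemma RDl : left_distributive Rmult Rplus. Proof. move=> x y z; ring. Qed.
Lemma RDr : right_distributive Rmult Rplus. Proof. move=> x y z; ring. Qed.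
HB.instance Definition _ := Monoid.isAddLaw.Build R Rmult Rplus RDl RDr.

Lemma Rle_big (I : Type) (s : seq I) (P : pred I) (F G : I -> R) :
  (forall i, P i -> F i <= G i) ->
  \big[Rplus/0]_(i <- s | P i) F i <= \big[Rplus/0]_(i <- s | P i) G i.
Proof.
move=> H; apply: (big_ind2 (fun a b => a <= b)) => //; first lra.
by move=> ? ? ? ? ? ?; lra.
Qed.

Lemma R0_big (I : Type) (s : seq I) (P : pred I) (F : I -> R) :
  (forall i, P i -> 0 <= F i) -> 0 <= \big[Rplus/0]_(i <- s | P i) F i.
Proof.
move=> H; apply: (big_ind (fun a => 0 <= a)) => //; first lra.
by move=> ? ? ? ?; lra.
Qed.

Lemma iter_Rplus k c : iter k (Rplus c) 0 = INR k * c.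
Proof. elim: k => [|k IH]; first by rewrite /=; ring. rewrite iterS IH S_INR; ring. Qed.

Lemma big_constR (T : finType) (A : pred T) c :
  \big[Rplus/0]_(i in A) c = INR #|A| * c.
Proof. by rewrite big_const iter_Rplus. Qed.

Lemma big_constT (T : finType) c :
  \big[Rplus/0]_(i : T) c = INR #|T| * c.
Proof. by rewrite big_const iter_Rplus. Qed.

Lemma exists_min (T : finType) (x0 : T) (F : T -> R) : exists j, forall i, F j <= F i.
Proof.
have H : forall s : seq T, exists j, forall i, i \in s -> F j <= F i.
  elim=> [|x s [j Hj]]; first by exists x0.
  case: (Rle_dec (F x) (F j)) => h.
  - exists x => i; rewrite inE => /orP [/eqP ->|/Hj]; lra.
  - exists j => i; rewrite inE => /orP [/eqP ->|/Hj]; lra.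
have [j Hj] := H (enum T); exists j => i; apply: Hj; by rewrite mem_enum.
Qed.

Lemma conv_exp l a b d : a <= d <= b ->
  exp (l * d) * (b - a) <= (b - d) * exp (l * a) + (d - a) * exp (l * b).
Proof.
move=> Hd.
have E1 : exp (l * a) = exp (l * d) * exp (l * (a - d)).
  by rewrite -exp_plus; congr exp; ring.
have E2 : exp (l * b) = exp (l * d) * exp (l * (b - d)).
  by rewrite -exp_plus; congr exp; ring.
have I1 := exp_ineq1_le (l * (a - d)).
have I2 := exp_ineq1_le (l * (b - d)).
have P := exp_pos (l * d).
rewrite E1 E2.
have : (b - d) * (exp (l * d) * (1 + l * (a - d))) <= (b - d) * (exp (l * d) * exp (l * (a - d))).
  apply: Rmult_le_compat_l; first lra. apply: Rmult_le_compat_l; lra.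
have : (d - a) * (exp (l * d) * (1 + l * (b - d))) <= (d - a) * (exp (l * d) * exp (l * (b - d))).
  apply: Rmult_le_compat_l; first lra. apply: Rmult_le_compat_l; lra.
nra.
Qed.

Lemma dpl_ext f g x l l' : derivable_pt_lim f x l -> (forall y, f y = g y) -> l = l' ->
  derivable_pt_lim g x l'.
Proof. intros Hd H <-. replace g with f; auto. apply functional_extensionality; auto. Qed.

Lemma mvt_le (f f' : R -> R) a b :
  (forall x, derivable_pt_lim f x (f' x)) -> a <= b ->
  (forall x, a < x < b -> 0 <= f' x) -> f a <= f b.
Proof.
  intros Hd Hab Hpos.
  destruct (Req_dec a b) as [->|Hne]; [lra|].
  set (pr := fun x => exist (fun l => derivable_pt_lim f x l) (f' x) (Hd x) : derivable_pt f x).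
  destruct (MVT_cor1 f a b pr) as [c [Hc Hac]]; [lra|].
  rewrite (derive_pt_eq_0 f c (f' c) (pr c) (Hd c)) in Hc.
  assert (0 <= f' c) by (apply Hpos; lra).
  assert (0 <= f' c * (b - a)) by (apply Rmult_le_pos; lra). lra.
Qed.

Lemma tanh_bound y : 0 <= y -> exp y * (2 - y) <= 2 + y.
Proof.
  intros Hy.
  set (h := fun t => 2 + t - exp t * (2 - t)).
  set (h' := fun t => 1 - exp t * (1 - t)).
  assert (Hd : forall t, derivable_pt_lim h t (h' t)).
  { intro t. unfold h, h'.
    eapply dpl_ext; [ apply (derivable_pt_lim_minus (plus_fct (fct_cte 2) Ranalysis1.id) (mult_fct exp (minus_fct (fct_cte 2) Ranalysis1.id)))| |].
    - apply derivable_pt_lim_plus; [apply derivable_pt_lim_const|apply derivable_pt_lim_id].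
    - apply derivable_pt_lim_mult; [apply derivable_pt_lim_exp|].
      apply derivable_pt_lim_minus; [apply derivable_pt_lim_const|apply derivable_pt_lim_id].
    - intro; reflexivity.
    - unfold fct_cte, Ranalysis1.id, minus_fct; ring. }
  assert (H0 : h 0 = 0) by (unfold h; rewrite exp_0; ring).
  assert (h 0 <= h y).
  { apply (mvt_le h h'); auto. intros t Ht. unfold h'.
    assert (E1 := exp_ineq1_le (- t)).
    assert (E2 : exp t * exp (-t) = 1) by (rewrite <- exp_plus; replace (t + - t) with 0 by ring; apply exp_0).
    assert (0 < exp t) by apply exp_pos.
    nra. }
  unfold h in *. lra.
Qed.

Lemma key_q p u : 0 <= p <= 1 -> 0 <= u ->
  p * exp u - p * (1 - p + p * exp u) <= u / 4 * (1 - p + p * exp u).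
Proof.
  intros Hp Hu.
  set (s := exp (u / 2)).
  assert (Hs2 : exp u = s * s) by (unfold s; rewrite <- exp_plus; f_equal; field).
  assert (Hs1 : 1 <= s) by (unfold s; assert (H := exp_ineq1_le (u/2)); lra).
  assert (HT := tanh_bound (u / 2) ltac:(lra)). fold s in HT.
  (* T = (s-1)/(s+1) <= u/4 :  4(s-1) <= u (s+1) *)
  assert (HT' : 4 * (s - 1) <= u * (s + 1)) by lra.
  rewrite Hs2.
  (* p(1-p)(s^2-1) <= T (1-p+ps^2),  T(1-p+ps^2) - p(1-p)(s^2-1) = (s-1)/(s+1) (1-p(s+1))^2 *)
  assert (Hid : (s - 1) * (1 - p + p * (s * s)) - (s + 1) * (p * (1 - p) * (s * s - 1))
                = (s - 1) * (1 - p * (s + 1)) ^ 2) by ring.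
  assert (Hnn : 0 <= (s - 1) * (1 - p * (s + 1)) ^ 2) by (apply Rmult_le_pos; [lra| apply pow2_ge_0]).
  assert (0 <= p * (s * s - 1)) by (apply Rmult_le_pos; nra).
  assert (Hpos : 0 < 1 - p + p * (s * s)) by lra.
  assert (Hl : p * (s * s) - p * (1 - p + p * (s * s)) = p * (1 - p) * (s * s - 1)) by ring.
  rewrite Hl.
  apply (Rmult_le_reg_l (s + 1)); [lra|].
  assert ((s - 1) * (1 - p + p * (s * s)) <= u / 4 * (s + 1) * (1 - p + p * (s * s))).
  { apply Rmult_le_compat_r; lra. }
  nra.
Qed.

Lemma hoeff_core p u : 0 <= p <= 1 -> 0 <= u ->
  exp (- (p * u)) * (1 - p + p * exp u) <= exp (u * u / 8).
Proof.
  intros Hp Hu.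
  set (G := fun t => (1 - p + p * exp t) * exp (- (p * t) - t * t / 8)).
  set (G' := fun t => exp (- (p * t) - t * t / 8) *
                  (p * exp t - (p + t / 4) * (1 - p + p * exp t))).
  assert (Hd : forall t, derivable_pt_lim G t (G' t)).
  { intro t. unfold G, G'.
    eapply dpl_ext; [apply (derivable_pt_lim_mult (plus_fct (fct_cte (1 - p)) (mult_real_fct p exp))
          (comp exp (minus_fct (mult_real_fct (- p) Ranalysis1.id) (mult_real_fct (/8) (mult_fct Ranalysis1.id Ranalysis1.id)))))| |].
    - apply derivable_pt_lim_plus; [apply derivable_pt_lim_const|].
      apply derivable_pt_lim_scal, derivable_pt_lim_exp.
    - apply derivable_pt_lim_comp; [|apply derivable_pt_lim_exp].
      apply derivable_pt_lim_minus; apply derivable_pt_lim_scal; [apply derivable_pt_lim_id|].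
      apply derivable_pt_lim_mult; apply derivable_pt_lim_id.
    - intro y. unfold plus_fct, fct_cte, mult_real_fct, comp, minus_fct, mult_fct, Ranalysis1.id.
      f_equal. f_equal. field.
    - unfold plus_fct, fct_cte, mult_real_fct, comp, minus_fct, mult_fct, Ranalysis1.id.
      replace (- p * t - / 8 * (t * t)) with (- (p * t) - t * t / 8) by field. field. }
  assert (G u <= G 0).
  { assert (- G 0 <= - G u); [|lra].
    apply (mvt_le (fun t => - G t) (fun t => - G' t)); auto.
    - intro t. apply (derivable_pt_lim_opp G). apply Hd.
    - intros t Ht. unfold G'. assert (Hk := key_q p t Hp ltac:(lra)).
      assert (0 < exp (- (p * t) - t * t / 8)) by apply exp_pos. nra. }
  assert (HG0 : G 0 = 1).
  { unfold G. replace (- (p * 0) - 0 * 0 / 8) with 0 by field. rewrite !exp_0. ring. }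
  rewrite HG0 in H. unfold G in H.
  assert (Hsplit : exp (- (p * u) - u * u / 8) = exp (- (p * u)) * / exp (u * u / 8)).
  { unfold Rminus. rewrite exp_plus (exp_Ropp (u * u / 8)). reflexivity. }
  rewrite Hsplit in H.
  assert (0 < exp (u * u / 8)) by apply exp_pos.
  assert (0 < exp (- (p*u))) by apply exp_pos.
  apply (Rmult_le_reg_r (/ exp (u * u / 8))); [apply Rinv_0_lt_compat; lra|].
  rewrite Rinv_r; [|lra]. nra.
Qed.

Lemma hoeff_fin (n : nat) (d : 'I_n -> R) (lam c : R) :
  (0 < n)%N -> 0 < lam -> 0 < c ->
  \big[Rplus/0]_(j < n) d j = 0 ->
  (forall j j', d j - d j' <= c) ->
  / INR n * \big[Rplus/0]_(j < n) exp (lam * d j) <= exp (lam * c * (lam * c) / 8).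
Proof.
move=> n0 hl hc hs hdc.
have [j1 Hj1] := @exists_min _ (Ordinal n0) d.
set a := d j1. set b := a + c.
have Hn : 0 < INR n by apply: lt_0_INR; apply/ltP.
have Hin : forall j, a <= d j <= b.
  move=> j; split; first exact: Hj1. have := hdc j j1. rewrite /b /a; lra.
have Ha : a <= 0.
  have : \big[Rplus/0]_(j < n) a <= \big[Rplus/0]_(j < n) d j by apply: Rle_big => j _; case: (Hin j).
  rewrite hs big_constT card_ord => h.
  case: (Rle_dec a 0) => // /Rnot_le_lt h'. have : 0 < INR n * a by apply: Rmult_lt_0_compat. lra.
have Hb : 0 <= b.
  have : \big[Rplus/0]_(j < n) d j <= \big[Rplus/0]_(j < n) b by apply: Rle_big => j _; case: (Hin j).
  rewrite hs big_constT card_ord => h.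
  case: (Rle_dec 0 b) => // /Rnot_le_lt h'. have : INR n * b < 0.
    rewrite -(Rmult_0_r (INR n)). by apply: Rmult_lt_compat_l. 
  lra.
have Hconv : \big[Rplus/0]_(j < n) (exp (lam * d j) * (b - a)) <=
    \big[Rplus/0]_(j < n) ((b - d j) * exp (lam * a) + (d j - a) * exp (lam * b)).
  by apply: Rle_big => j _; apply: conv_exp.
rewrite -big_distrl /= big_split /= -!big_distrl /= in Hconv.
have E1 : \big[Rplus/0]_(j < n) (b - d j) = INR n * b.
  rewrite (eq_bigr (fun j => b + (-1) * d j)); last by move=> j _; ring.
  by rewrite big_split /= -big_distrr /= hs big_constT card_ord; ring.
have E2 : \big[Rplus/0]_(j < n) (d j - a) = - (INR n * a).
  rewrite (eq_bigr (fun j => d j + (-1) * a)); last by move=> j _; ring.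
  by rewrite big_split /= hs big_constT card_ord; ring.
rewrite E1 E2 in Hconv.
have hba : b - a = c by rewrite /b; ring.
rewrite hba in Hconv.
set p := - a / c.
have Hp : 0 <= p <= 1.
  rewrite /p; split.
  - apply: Rmult_le_pos; [lra| left; apply: Rinv_0_lt_compat; lra].
  - apply (Rmult_le_reg_r c) => //. rewrite /Rdiv Rmult_assoc Rinv_l; lra.
have Hcore := hoeff_core p (lam * c) Hp ltac:(nra).
have Ea : a = - (p * c) by rewrite /p; field; lra.
have Eb : b = (1 - p) * c by rewrite /b Ea; ring.
suff : / INR n * \big[Rplus/0]_(j < n) exp (lam * d j) <=
         exp (- (p * (lam * c))) * (1 - p + p * exp (lam * c)) by lra.
set S := \big[Rplus/0]_(j < n) exp (lam * d j) in Hconv *.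
have key : S * c <= INR n * (exp (- (p * (lam * c))) * (1 - p + p * exp (lam * c))) * c.
  have -> : INR n * (exp (- (p * (lam * c))) * (1 - p + p * exp (lam * c))) * c =
            INR n * b * exp (lam * a) + - (INR n * a) * exp (lam * b).
    rewrite Eb Ea.
    have -> : exp (lam * ((1 - p) * c)) = exp (- (p * (lam * c))) * exp (lam * c).
      by rewrite -exp_plus; congr exp; ring.
    have -> : lam * - (p * c) = - (p * (lam * c)) by ring.
    ring.
  lra.
have key2 : S <= INR n * (exp (- (p * (lam * c))) * (1 - p + p * exp (lam * c))).
  by apply: (Rmult_le_reg_r c).
apply: (Rmult_le_reg_l (INR n)) => //.
rewrite -Rmult_assoc Rinv_r; lra.
Qed.

Ltac slia := unfold subn, addn, muln in *; lia.

Section Mc.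
Variables (m n : nat).
Hypothesis n0 : (0 < n)%N.
Local Notation Om_t := {ffun 'I_m -> 'I_n}.

Definition upd (Om : Om_t) (k : nat) (j : 'I_n) : Om_t :=
  [ffun i => if val i == k then j else Om i].

Lemma upd_same Om k j j' : upd (upd Om k j) k j' = upd Om k j'.
Proof. apply/ffunP => i; rewrite !ffunE; by case: (val i == k). Qed.

Lemma upd_comm Om k k' j j' : k <> k' -> upd (upd Om k j) k' j' = upd (upd Om k' j') k j.
Proof.
move=> hk; apply/ffunP => i; rewrite !ffunE.
case: (eqVneq (val i) k') => [e|ne]; case: (eqVneq (val i) k) => [e'|ne'] //.
by exfalso; apply: hk; rewrite -e -e'.
Qed.

Lemma upd_eq Om (k : 'I_m) j : (upd Om k j == Om) = (Om k == j).
Proof.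
apply/eqP/eqP => [<-|<-]; first by rewrite ffunE eqxx.
by apply/ffunP => i; rewrite ffunE; case: eqP => // /val_inj ->.
Qed.

Lemma upd_at Om (k : 'I_m) j : upd Om k j k = j.
Proof. by rewrite ffunE eqxx. Qed.

Definition Av (k : nat) (G : Om_t -> R) (Om : Om_t) : R :=
  / INR n * \big[Rplus/0]_(j : 'I_n) G (upd Om k j).

Definition Ex (G : Om_t -> R) : R :=
  / INR (n ^ m) * \big[Rplus/0]_(Om : Om_t) G Om.

Lemma INRn_pos : 0 < INR n.
Proof. apply: lt_0_INR; exact/ltP. Qed.

Lemma card_Om : #|{: Om_t}| = (n ^ m)%N.
Proof. by rewrite card_ffun !card_ord. Qed.

Lemma INRnm_pos : 0 < INR (n ^ m).
Proof. apply: lt_0_INR; apply/ltP; by rewrite expn_gt0 n0. Qed.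

Lemma Av_inv k G Om j : Av k G (upd Om k j) = Av k G Om.
Proof. rewrite /Av; congr (_ * _); apply: eq_bigr => j' _; by rewrite upd_same. Qed.

Lemma Av_ext k G G' Om : (forall Om, G Om = G' Om) -> Av k G Om = Av k G' Om.
Proof. move=> h; rewrite /Av; congr (_ * _); apply: eq_bigr => j _; exact: h. Qed.

Lemma Ex_ext G G' : (forall Om, G Om = G' Om) -> Ex G = Ex G'.
Proof. move=> h; rewrite /Ex; congr (_ * _); apply: eq_bigr => j _; exact: h. Qed.

Lemma Ex_le G G' : (forall Om, G Om <= G' Om) -> Ex G <= Ex G'.
Proof.
move=> h; rewrite /Ex; apply: Rmult_le_compat_l.
  left; apply: Rinv_0_lt_compat; exact: INRnm_pos.
by apply: Rle_big => i _.
Qed.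

Lemma Ex_scal G c : Ex (fun Om => G Om * c) = Ex G * c.
Proof. by rewrite /Ex -big_distrl /=; ring. Qed.

Lemma Ex_const G c : (forall Om, G Om = c) -> Ex G = c.
Proof.
move=> h; rewrite (Ex_ext _ (fun _ => c)) // /Ex big_constT card_Om.
have := INRnm_pos; move=> ?; field; lra.
Qed.

Lemma Av_mul k H G Om : (forall j, H (upd Om k j) = H Om) ->
  Av k (fun O => H O * G O) Om = H Om * Av k G Om.
Proof.
move=> h; rewrite /Av (eq_bigr (fun j => H Om * G (upd Om k j))); last by move=> j _; rewrite h.
rewrite -big_distrr /=; ring.
Qed.

Lemma sum_upd (k : 'I_m) (G : Om_t -> R) j :
  \big[Rplus/0]_(Om : Om_t) G (upd Om k j) = INR n * \big[Rplus/0]_(Om : Om_t | Om k == j) G Om.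
Proof.
rewrite (partition_big (fun Om : Om_t => Om k) xpredT) //=.
rewrite (eq_bigr (fun _ => \big[Rplus/0]_(Om : Om_t | Om k == j) G Om)).
  by rewrite big_constT card_ord.
move=> j0 _.
rewrite (reindex_onto (fun Om => upd Om k j0) (fun Om => upd Om k j)); last first.
  by move=> Om /eqP <-; rewrite upd_same; apply/eqP; rewrite upd_eq.
apply: eq_big => Om; last by move=> /andP [_ /eqP ->].
by rewrite upd_at eqxx upd_same upd_eq.
Qed.

Lemma Ex_Av (k : nat) G : (k < m)%N -> Ex (Av k G) = Ex G.
Proof.
move=> hk; set k' := Ordinal hk.
rewrite /Ex /Av -big_distrr /= exchange_big /=.
rewrite (eq_bigr (fun j => INR n * \big[Rplus/0]_(Om : Om_t | Om k' == j) G Om)); last first.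
  by move=> j _; rewrite -(sum_upd k').
rewrite -big_distrr /= [in RHS](partition_big (fun Om : Om_t => Om k') xpredT) //=.
have := INRn_pos => ?. have := INRnm_pos => ?. rewrite -!Rmult_assoc. congr (_ * _). field. lra.
Qed.


Variables (f : Om_t -> R) (c : R).
Hypothesis hc : 0 < c.
Hypothesis hBD : forall (k : nat) Om j j', (k < m)%N -> f (upd Om k j) - f (upd Om k j') <= c.

Fixpoint Fr (s : nat) : Om_t -> R :=
  match s with 0 => f | s'.+1 => Av (m - s'.+1) (Fr s') end.
Definition Fk k := Fr (m - k).

Lemma upd_out Om i j : (m <= i)%N -> upd Om i j = Om.
Proof.
move=> hi; apply/ffunP => x; rewrite ffunE.
case: eqP => // e; have := ltn_ord x; rewrite e => h.
by exfalso; move: (leq_trans h hi); rewrite ltnn.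
Qed.

Lemma Fr_inv s : forall i Om j, (m - s <= i)%N -> Fr s (upd Om i j) = Fr s Om.
Proof.
elim: s => [|s IH] i Om j hi /=.
  by rewrite upd_out //; rewrite subn0 in hi.
case: (eqVneq i (m - s.+1)%N) => [->|ne]; first exact: Av_inv.
rewrite /Av; congr (_ * _); apply: eq_bigr => j' _.
rewrite upd_comm; last by move/eqP: ne.
apply: IH. move/eqP: ne => ne. apply/leP; move/leP: hi => hi. slia.
Qed.

Lemma Fr_BD s : forall k0 Om j j', (k0 < m - s)%N -> Fr s (upd Om k0 j) - Fr s (upd Om k0 j') <= c.
Proof.
elim: s => [|s IH] k0 Om j j' hk /=.
  by apply: hBD; rewrite subn0 in hk.
have ne : k0 <> (m - s.+1)%N by move=> e; rewrite e ltnn in hk.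
rewrite /Av -Rmult_minus_distr_l.
have -> : \big[Rplus/0]_(j0 : 'I_n) Fr s (upd (upd Om k0 j) (m - s.+1) j0) -
  \big[Rplus/0]_(j0 : 'I_n) Fr s (upd (upd Om k0 j') (m - s.+1) j0) =
  \big[Rplus/0]_(j0 : 'I_n) (Fr s (upd (upd Om k0 j) (m - s.+1) j0) +
       (-1) * Fr s (upd (upd Om k0 j') (m - s.+1) j0)).
  by rewrite big_split /= -big_distrr /=; ring.
have H : \big[Rplus/0]_(j0 : 'I_n) (Fr s (upd (upd Om k0 j) (m - s.+1) j0) +
       (-1) * Fr s (upd (upd Om k0 j') (m - s.+1) j0)) <= \big[Rplus/0]_(j0 : 'I_n) c.
  apply: Rle_big => j0 _. rewrite !(upd_comm _ _ _ _ _ ne).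
  have := IH k0 (upd Om (m - s.+1) j0) j j'.
  have h : (k0 < m - s)%N by move/leP: hk => hk; apply/leP; slia.
  move=> /(_ h). lra.
rewrite big_constT card_ord in H.
have := INRn_pos => hn.
apply: (Rmult_le_reg_l (INR n)) => //.
rewrite -Rmult_assoc Rinv_r; lra.
Qed.

Lemma Fr_Ex s : (s <= m)%N -> Ex (Fr s) = Ex f.
Proof.
elim: s => [|s IH] hs //=.
rewrite Ex_Av; first by apply: IH; apply: ltnW.
by move/leP: hs => hs; apply/leP; slia.
Qed.

Lemma Fk_rec k Om : (k < m)%N -> Fk k Om = Av k (Fk k.+1) Om.
Proof.
move=> hk; rewrite /Fk.
have -> : (m - k = (m - k.+1).+1)%N by move/leP: hk => hk; slia.
rewrite /=.
have -> : (m - (m - k.+1).+1 = k)%N by move/leP: hk => hk; slia.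
done.
Qed.

Lemma Fk_inv k i Om j : (k <= i)%N -> Fk k (upd Om i j) = Fk k Om.
Proof. move=> h; apply: Fr_inv; apply/leP; move/leP: h => h; slia. Qed.

Lemma Fk_BD k Om j j' : (k < m)%N -> Fk k.+1 (upd Om k j) - Fk k.+1 (upd Om k j') <= c.
Proof. move=> h; apply: Fr_BD; apply/leP; move/leP: h => h; slia. Qed.

Variable lam : R.
Hypothesis hlam : 0 < lam.

Lemma step k Om : (k < m)%N ->
  Av k (fun O => exp (lam * (Fk k.+1 O - Fk k O))) Om <= exp (lam * c * (lam * c) / 8).
Proof.
move=> hk.
have Hinv : forall j, Fk k (upd Om k j) = Fk k Om by move=> j; apply: Fk_inv.
rewrite /Av (eq_bigr (fun j => exp (lam * (Fk k.+1 (upd Om k j) - Fk k Om)))); last first.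
  by move=> j _; rewrite Hinv.
apply: hoeff_fin => //.
  rewrite (eq_bigr (fun j => Fk k.+1 (upd Om k j) + (-1) * Fk k Om)); last by move=> j _; ring.
  rewrite big_split /= big_constT card_ord (Fk_rec k Om hk) /Av.
  have := INRn_pos => ?. set S := \big[Rplus/0]_(j < n) _.
  have -> : INR n * (-1 * (/ INR n * S)) = - S * (INR n * / INR n) by ring.
  rewrite Rinv_r; lra.
move=> j j'. have := Fk_BD k Om j j' hk. lra.
Qed.

Lemma mgf k : (k <= m)%N ->
  Ex (fun Om => exp (lam * (Fk k Om - Fk 0 Om))) <= exp (INR k * (lam * c * (lam * c) / 8)).
Proof.
elim: k => [|k IH] hk.
  rewrite (Ex_const _ 1); first by rewrite Rmult_0_l exp_0; lra.
  by move=> Om; rewrite Rminus_diag Rmult_0_r exp_0.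
have hk' : (k < m)%N by [].
rewrite -(Ex_Av k _ hk').
set B := exp (lam * c * (lam * c) / 8).
apply: Rle_trans (_ : Ex (fun Om => exp (lam * (Fk k Om - Fk 0 Om)) * B) <= _).
  apply: Ex_le => Om.
  rewrite (Av_ext k _ (fun O => exp (lam * (Fk k O - Fk 0 O)) * exp (lam * (Fk k.+1 O - Fk k O)))); last first.
    by move=> O; rewrite -exp_plus; congr exp; ring.
  rewrite Av_mul; last by move=> j; rewrite !Fk_inv.
  apply: Rmult_le_compat_l; first by left; apply: exp_pos.
  exact: step.
rewrite Ex_scal.
apply: Rle_trans (_ : exp (INR k * (lam * c * (lam * c) / 8)) * B <= _).
  apply: Rmult_le_compat_r; first by left; apply: exp_pos.
  by apply: IH; apply: ltnW.
by rewrite /B -exp_plus S_INR; right; congr exp; ring.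
Qed.


Lemma Fk_m Om : Fk m Om = f Om.
Proof. by rewrite /Fk subnn. Qed.

Lemma F0_const Om Om' : Fk 0 Om = Fk 0 Om'.
Proof.
pose Od d : Om_t := [ffun i => if (val i < d)%N then Om' i else Om i].
have H : forall d, Fk 0 (Od d) = Fk 0 Om.
  elim=> [|d IH].
    by congr Fk; apply/ffunP => i; rewrite ffunE.
  case: (ltnP d m) => hd.
    have -> : Od d.+1 = upd (Od d) d (Om' (Ordinal hd)).
      apply/ffunP => i; rewrite !ffunE ltnS leq_eqVlt.
      case: (eqVneq (val i) d) => [e|ne] /=.
        by congr (Om' _); apply: val_inj.
      by [].
    by rewrite Fk_inv.
  have -> : Od d.+1 = Od d.
    apply/ffunP => i; rewrite !ffunE.
    have h1 := ltn_ord i.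
    have -> : (val i < d.+1)%N by apply: (leq_trans h1); apply: leqW.
    by have -> : (val i < d)%N by apply: (leq_trans h1).
  exact: IH.
have <- : Od m = Om' by apply/ffunP => i; rewrite ffunE ltn_ord.
by rewrite H.
Qed.

Lemma F0_Ex Om : Fk 0 Om = Ex f.
Proof.
rewrite -(Fr_Ex m (leqnn m)).
have -> : Fr m = Fk 0 by rewrite /Fk subn0.
by symmetry; apply: Ex_const => O; apply: F0_const.
Qed.

Lemma tail (P : Om_t -> bool) t :
  (forall Om, P Om -> Ex f + t <= f Om) ->
  INR #|[set Om | P Om]| <= INR (n ^ m) * (exp (- (lam * t)) * exp (INR m * (lam * c * (lam * c) / 8))).
Proof.
move=> hP.
set g := fun Om => exp (lam * (Fk m Om - Fk 0 Om)) * exp (- (lam * t)).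
have H1 : INR #|[set Om | P Om]| <= \big[Rplus/0]_(Om in [set Om | P Om]) g Om.
  rewrite -(Rmult_1_r (INR _)) -big_constR.
  apply: Rle_big => Om; rewrite inE => /hP h.
  rewrite /g -exp_plus Fk_m F0_Ex.
  have := exp_ineq1_le (lam * (f Om - Ex f) + - (lam * t)).
  have : 0 <= lam * (f Om - Ex f) + - (lam * t).
    have : 0 <= lam * (f Om - Ex f - t) by apply: Rmult_le_pos; lra.
    lra.
  lra.
have H2 : \big[Rplus/0]_(Om in [set Om | P Om]) g Om <= \big[Rplus/0]_(Om : Om_t) g Om.
  rewrite [X in _ <= X](bigID (mem [set Om | P Om])) /=.
  have : 0 <= \big[Rplus/0]_(i | ~~ (i \in [set Om | P Om])) g i.
    by apply: R0_big => i _; rewrite /g; apply: Rmult_le_pos; left; apply: exp_pos.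
  move=> h0; rewrite -[X in X <= _]Rplus_0_r; apply: Rplus_le_compat => //; by right.
have H3 : \big[Rplus/0]_(Om : Om_t) g Om = INR (n ^ m) * Ex g.
  rewrite /Ex -Rmult_assoc Rinv_r ?Rmult_1_l //.
  have := INRnm_pos; lra.
have H4 : Ex g <= exp (- (lam * t)) * exp (INR m * (lam * c * (lam * c) / 8)).
  rewrite /g Ex_scal Rmult_comm.
  apply: Rmult_le_compat_l; first by left; apply: exp_pos.
  exact: mgf.
have := INRnm_pos => hp.
have : INR (n ^ m) * Ex g <= INR (n ^ m) * (exp (- (lam * t)) * exp (INR m * (lam * c * (lam * c) / 8))).
  by apply: Rmult_le_compat_l; lra.
lra.
Qed.

End Mc.

Set Implicit Arguments. Unset Strict Implicit.

Arguments upd {m n}.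

Lemma sqnorm_ge0 k (x : 'I_k -> R) : 0 <= sqnorm x.
Proof. rewrite /sqnorm /rsum; apply: R0_big => i _; nra. Qed.

Lemma sum_prod k (a b : 'I_k -> R) :
  \big[Rplus/0]_(i < k) \big[Rplus/0]_(j < k) (a i * b j) =
  \big[Rplus/0]_(i < k) a i * \big[Rplus/0]_(j < k) b j.
Proof. by rewrite big_distrlr. Qed.

Lemma cauchy_schwarz k (v w : 'I_k -> R) :
  rsum (fun i => v i * w i) * rsum (fun i => v i * w i) <= sqnorm v * sqnorm w.
Proof.
rewrite /sqnorm /rsum.
have H : 0 <= \big[Rplus/0]_(i < k) \big[Rplus/0]_(j < k)
            ((v i * w j - v j * w i) * (v i * w j - v j * w i)).
  by apply: R0_big => i _; apply: R0_big => j _; exact: Rle_0_sqr.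
have E : \big[Rplus/0]_(i < k) \big[Rplus/0]_(j < k)
            ((v i * w j - v j * w i) * (v i * w j - v j * w i)) =
   \big[Rplus/0]_(i < k) \big[Rplus/0]_(j < k) ((v i * v i) * (w j * w j)) +
   \big[Rplus/0]_(i < k) \big[Rplus/0]_(j < k) ((w i * w i) * (v j * v j)) +
   (-2) * \big[Rplus/0]_(i < k) \big[Rplus/0]_(j < k) ((v i * w i) * (v j * w j)).
  transitivity (\big[Rplus/0]_(i < k) (\big[Rplus/0]_(j < k) ((v i * v i) * (w j * w j)) +
     \big[Rplus/0]_(j < k) ((w i * w i) * (v j * v j)) + (-2) * \big[Rplus/0]_(j < k) ((v i * w i) * (v j * w j)))); last first.
    by rewrite !big_split /= big_distrr.
  apply: eq_bigr => i _.
  rewrite big_distrr /= -!big_split /=; apply: eq_bigr => j _; ring.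
rewrite E !sum_prod in H. nra.
Qed.

Definition vadd k (v w : 'I_k -> R) := fun i => v i + w i.
Definition vopp k (v : 'I_k -> R) := fun i => - v i.

Lemma triangle k (v w : 'I_k -> R) :
  sqrt (sqnorm (vadd v w)) <= sqrt (sqnorm v) + sqrt (sqnorm w).
Proof.
have hv := sqnorm_ge0 v; have hw := sqnorm_ge0 w.
have E : sqnorm (vadd v w) = sqnorm v + 2 * rsum (fun i => v i * w i) + sqnorm w.
  rewrite /sqnorm /rsum /vadd big_distrr /= -!big_split /=; apply: eq_bigr => i _; ring.
have CS := cauchy_schwarz v w.
set B := rsum (fun i => v i * w i) in E CS.
have hB : B <= sqrt (sqnorm v) * sqrt (sqnorm w).
  rewrite -sqrt_mult //.
  case: (Rle_dec B 0) => hb.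
    by apply: Rle_trans (sqrt_pos _); lra.
  rewrite -(sqrt_square B); last lra.
  by apply: sqrt_le_1_alt.
have hsv := sqrt_sqrt _ hv; have hsw := sqrt_sqrt _ hw.
have hp := sqrt_pos (sqnorm v); have hq := sqrt_pos (sqnorm w).
rewrite -(sqrt_square (sqrt (sqnorm v) + sqrt (sqnorm w))); last lra.
apply: sqrt_le_1_alt. rewrite E. nra.
Qed.

Lemma sqnorm_opp k (v : 'I_k -> R) : sqnorm (vopp v) = sqnorm v.
Proof. rewrite /sqnorm /rsum /vopp; apply: eq_bigr => i _; ring. Qed.

Lemma delta_sum k (F : 'I_k -> R) j :
  \big[Rplus/0]_(i < k) (F i * (if i == j then 1 else 0)) = F j.
Proof.
rewrite (bigD1 j) //= eqxx big1 ?Rplus_0_r ?Rmult_1_r // => i /negbTE ->; ring.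
Qed.

Lemma proj_sq n r (U : 'I_n -> 'I_r -> R) (hU : orthonormal_cols U) j :
  sqnorm (projS U (e_vec j)) = rsum (fun a => U j a * U j a).
Proof.
have Hp : forall i, projS U (e_vec j) i = rsum (fun a => U i a * U j a).
  move=> i; rewrite /projS /rsum; apply: eq_bigr => a _.
  by rewrite /e_vec delta_sum.
rewrite /sqnorm.
rewrite {1}/rsum (eq_bigr (fun i => \big[Rplus/0]_(a < r) \big[Rplus/0]_(b < r)
     ((U j a * U j b) * (U i a * U i b)))); last first.
  move=> i _; rewrite !Hp /rsum big_distrlr /=; apply: eq_bigr => a _; apply: eq_bigr => b _; ring.
rewrite exchange_big /=.
rewrite /rsum; apply: eq_bigr => a _.
rewrite exchange_big /=.
rewrite (eq_bigr (fun b => (U j a * U j b) * (if b == a then 1 else 0))).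
  by rewrite delta_sum.
move=> b _; rewrite -big_distrr /=.
have := hU a b; rewrite /rsum => ->.
by rewrite eq_sym.
Qed.

Lemma le_bigmax_seq (T : eqType) (F : T -> R) (s : seq T) i :
  i \in s -> F i <= \big[Rmax/0]_(j <- s) F j.
Proof.
elim: s => [|x s IH] //; rewrite inE big_cons => /orP [/eqP ->|/IH h].
  exact: Rmax_l.
apply: Rle_trans h _; exact: Rmax_r.
Qed.

Lemma le_bigmax k (F : 'I_k -> R) i : F i <= \big[Rmax/0]_(j < k) F j.
Proof. apply: le_bigmax_seq; by rewrite mem_index_enum. Qed.


Lemma Ex_add m n G1 G2 : Ex m n (fun Om => G1 Om + G2 Om) = Ex m n G1 + Ex m n G2.
Proof. by rewrite /Ex big_split /=; ring. Qed.

Lemma Ex_sum m n (I : Type) (s : seq I) (G : I -> {ffun 'I_m -> 'I_n} -> R) :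
  Ex m n (fun Om => \big[Rplus/0]_(x <- s) G x Om) = \big[Rplus/0]_(x <- s) Ex m n (G x).
Proof. by rewrite /Ex exchange_big /= big_distrr. Qed.

Lemma Ex_sq m n (n0 : (0 < n)%N) G : Ex m n G * Ex m n G <= Ex m n (fun Om => G Om * G Om).
Proof.
set e := Ex m n G.
have H : 0 <= Ex m n (fun Om => (G Om - e) * (G Om - e)).
  have -> : 0 = Ex m n (fun _ => 0) by symmetry; apply: (Ex_const _ _ n0).
  apply: (Ex_le _ _ n0) => // Om; exact: Rle_0_sqr.
rewrite (Ex_ext _ _ (fun Om => (G Om - e) * (G Om - e))
          (fun Om => (G Om * G Om + G Om * (-2 * e)) + e * e)) in H; last by move=> Om; ring.
rewrite !Ex_add Ex_scal (Ex_const _ _ n0 (fun _ => e * e) (e * e)) // in H.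
rewrite -/e in H. nra.
Qed.

Section App.
Variables (n r m : nat) (U : 'I_n -> 'I_r -> R) (y : 'I_n -> R).
Hypothesis n0 : (0 < n)%N.
Hypothesis hU : orthonormal_cols U.
Hypothesis hy : in_perp U y.

Definition X (j : 'I_n) : 'I_r -> R := fun a => U j a * y j.
Definition kappa := \big[Rmax/0]_(j < n) sqnorm (projS U (e_vec j)).

Lemma sqX j : sqnorm (X j) <= y j * y j * kappa.
Proof.
have -> : sqnorm (X j) = y j * y j * rsum (fun a => U j a * U j a).
  rewrite /sqnorm /rsum big_distrr /=; apply: eq_bigr => a _; rewrite /X; ring.
apply: Rmult_le_compat_l; first exact: Rle_0_sqr.
rewrite -proj_sq //; exact: (le_bigmax (fun j => sqnorm (projS U (e_vec j)))).
Qed.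

Lemma term_Ex (i i' : 'I_m) a :
  Ex m n (fun Om => X (Om i) a * X (Om i') a) =
  if i == i' then / INR n * \big[Rplus/0]_(j < n) (X j a * X j a) else 0.
Proof.
rewrite -(Ex_Av _ _ n0 i) //.
case: (eqVneq i i') => [<-|ne].
  apply: (Ex_const _ _ n0) => Om; rewrite /Av; congr (_ * _).
  by apply: eq_bigr => j _; rewrite upd_at.
apply: (Ex_const _ _ n0) => Om.
rewrite (Av_ext _ _ _ _ (fun O => X (O i') a * X (O i) a)); last by move=> O; ring.
rewrite Av_mul; last first.
  move=> j; rewrite ffunE; case: eqP => // e.
  by exfalso; move/eqP: ne; apply; apply: val_inj.
rewrite /Av (eq_bigr (fun j => X j a)); last by move=> j _; rewrite upd_at.
have := hy a; rewrite /rsum /X => ->; ring.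
Qed.

Lemma Ex_sampled :
  Ex m n (sampled_sqnorm U y) = INR m * / INR n * \big[Rplus/0]_(j < n) sqnorm (X j).
Proof.
rewrite (Ex_ext _ _ _ (fun Om => \big[Rplus/0]_(a < r) \big[Rplus/0]_(i < m)
            \big[Rplus/0]_(i' < m) (X (Om i) a * X (Om i') a))); last first.
  move=> Om; rewrite /sampled_sqnorm /sqnorm /rsum; apply: eq_bigr => a _.
  by rewrite big_distrlr.
rewrite Ex_sum.
rewrite (eq_bigr (fun a => INR m * (/ INR n * \big[Rplus/0]_(j < n) (X j a * X j a)))); last first.
  move=> a _; rewrite Ex_sum.
  rewrite (eq_bigr (fun i => / INR n * \big[Rplus/0]_(j < n) (X j a * X j a))).
    by rewrite big_constT card_ord.
  move=> i _; rewrite Ex_sum.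
  rewrite (eq_bigr (fun i' => (/ INR n * \big[Rplus/0]_(j < n) (X j a * X j a)) * (if i' == i then 1 else 0))).
    by rewrite (delta_sum (fun _ => / INR n * \big[Rplus/0]_(j < n) (X j a * X j a))).
  move=> i' _; rewrite term_Ex eq_sym; case: (i' == i); ring.
rewrite -big_distrr /= -big_distrr /= exchange_big /=.
rewrite Rmult_assoc; congr (_ * (_ * _)).
Qed.

Lemma Ex_sampled_le :
  Ex m n (sampled_sqnorm U y) <= INR m / INR n * kappa * sqnorm y.
Proof.
rewrite Ex_sampled.
have hn : 0 < INR n by apply: lt_0_INR; apply/ltP.
have hm : 0 <= INR m by apply: pos_INR.
have : \big[Rplus/0]_(j < n) sqnorm (X j) <= \big[Rplus/0]_(j < n) (y j * y j * kappa).
  by apply: Rle_big => j _; apply: sqX.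
rewrite -big_distrl /= => h.
have hmn : 0 <= INR m * / INR n by apply: Rmult_le_pos; [lra| left; apply: Rinv_0_lt_compat].
have := Rmult_le_compat_l _ _ _ hmn h.
rewrite /sqnorm /rsum /Rdiv => h2.
set S := \big[Rplus/0]_(i < n) (y i * y i) in h2 *.
have -> : INR m * / INR n * kappa * S = INR m * / INR n * (S * kappa) by ring.
exact: h2.
Qed.


Definition iota_y := infnorm y.

Lemma abs_le_iota j : Rabs (y j) <= iota_y.
Proof. exact: (le_bigmax (fun i => Rabs (y i))). Qed.

Lemma normX j : sqrt (sqnorm (X j)) <= iota_y * sqrt kappa.
Proof.
have hk : 0 <= kappa by apply: Rle_trans (sqnorm_ge0 (projS U (e_vec j))) _; exact: (le_bigmax (fun j => sqnorm (projS U (e_vec j)))).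
apply: Rle_trans (sqrt_le_1_alt _ _ (sqX j)) _.
rewrite sqrt_mult; [|exact: Rle_0_sqr|exact: hk].
have -> : sqrt (y j * y j) = Rabs (y j) by apply: sqrt_Rsqr_abs.
apply: Rmult_le_compat_r; first exact: sqrt_pos.
exact: abs_le_iota.
Qed.

Lemma sqnorm_ext k (v w : 'I_k -> R) : (forall i, v i = w i) -> sqnorm v = sqnorm w.
Proof. move=> h; rewrite /sqnorm /rsum; apply: eq_bigr => i _; by rewrite h. Qed.

Lemma BD (k : nat) (Om : {ffun 'I_m -> 'I_n}) j j' : (k < m)%N ->
  sqrt (sampled_sqnorm U y (upd Om k j)) - sqrt (sampled_sqnorm U y (upd Om k j'))
    <= 2 * iota_y * sqrt kappa.
Proof.
move=> hk; set k' := Ordinal hk.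
set T := fun a => \big[Rplus/0]_(i < m | i != k') X (Om i) a.
have HS : forall jj, sampled_sqnorm U y (upd Om k jj) = sqnorm (vadd (X jj) T).
  move=> jj; rewrite /sampled_sqnorm; apply: sqnorm_ext => a.
  rewrite /rsum (bigD1 k') //= /vadd /T; congr Rplus.
    by rewrite ffunE eqxx.
  apply: eq_bigr => i ne; rewrite ffunE; case: eqP => // e.
  by exfalso; move/eqP: ne; apply; apply: val_inj.
rewrite !HS.
have t1 := triangle (X j) T.
have t2 := triangle (vadd (X j') T) (vopp (X j')).
have E : sqnorm (vadd (vadd (X j') T) (vopp (X j'))) = sqnorm T.
  by apply: sqnorm_ext => a; rewrite /vadd /vopp; ring.
rewrite E sqnorm_opp in t2.
have := normX j; have := normX j'. lra.
Qed.

End App.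

Lemma card_split m n (E : {ffun 'I_m -> 'I_n} -> bool) :
  INR #|[set Om | E Om]| + INR #|[set Om | ~~ E Om]| = INR (n ^ m).
Proof.
rewrite -plus_INR plusE; congr INR.
have -> : [set Om | ~~ E Om] = ~: [set Om | E Om] by apply/setP => Om; rewrite !inE.
by rewrite cardsC card_ffun !card_ord.
Qed.

Lemma Rleb_true x z : x <= z -> Rleb x z = true.
Proof. by rewrite /Rleb; case: Rle_dec. Qed.

Lemma Rleb_false x z : Rleb x z = false -> z < x.
Proof. rewrite /Rleb; case: Rle_dec => // h _; lra. Qed.

Lemma prob_bound m n (n0 : (0 < n)%N) (E : {ffun 'I_m -> 'I_n} -> bool) d :
  INR #|[set Om | ~~ E Om]| <= INR (n ^ m) * d -> 1 - d <= prob_Omega E.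
Proof.
move=> Hbad.
have hnm : 0 < INR (n ^ m) by apply: lt_0_INR; apply/ltP; rewrite expn_gt0 n0.
rewrite /prob_Omega.
set G := INR #|_|.
have hcs : G + INR #|[set Om | ~~ E Om]| = INR (n ^ m) by exact: card_split.
move: Hbad hcs hnm.
generalize G (INR #|[set Om | ~~ E Om]|) (INR (n ^ m)) => G' B N hb hc hn.
have -> : G' = N - B by lra.
apply: (Rmult_le_reg_l N) => //.
rewrite /Rdiv (Rmult_comm (N - B)) -Rmult_assoc Rinv_r; last by apply: Rgt_not_eq; lra.
nra.
Qed.

Unset Implicit Arguments.

Theorem lemma2 (n r m : nat) (U : 'I_n -> 'I_r -> R) (y : 'I_n -> R) (delta : R)
  (hr : (0 < r)%N)
  (hU : orthonormal_cols U)
  (hy : in_perp U y)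
  (hy0 : exists i : 'I_n, y i <> 0)
  (hdelta : 0 < delta) :
  let beta := sqrt (2 * vec_coherence y * ln (1 / delta)) in
  1 - delta <=
   prob_Omega (fun Om : {ffun 'I_m -> 'I_n} =>
     Rleb (sampled_sqnorm U y Om)
          ((1 + beta) ^ 2 * (INR m / INR n) * (INR r * coherence U / INR n) * sqnorm y)).
Proof.
move=> beta.
have [i0 hi0] := hy0.
have n0 : (0 < n)%N by apply: leq_ltn_trans (leq0n i0) (ltn_ord i0).
have hn : 0 < INR n by apply: lt_0_INR; apply/ltP.
have hnm : 0 < INR (n ^ m) by apply: lt_0_INR; apply/ltP; rewrite expn_gt0 n0.
have hrr : 0 < INR r by apply: lt_0_INR; apply/ltP.
set E := fun Om : {ffun 'I_m -> 'I_n} => _.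
apply: (prob_bound n0).
case: (Rle_dec 1 delta) => hd1.
  have : 0 <= INR (n ^ m) * (delta - 1) by apply: Rmult_le_pos; lra.
  have := card_split E; have := pos_INR #|[set Om | E Om]|.
  move=> *; nra.
have hd1' : delta < 1 by lra.
case: (posnP m) => [m0|mpos].
  have : [set Om | ~~ E Om] = set0.
    apply/setP => Om; rewrite !inE /E Rleb_true //.
    have -> : sampled_sqnorm U y Om = 0.
      rewrite /sampled_sqnorm /sqnorm /rsum big1 // => a _.
      by rewrite big1 ?Rmult_0_l // => i; move: (ltn_ord i); rewrite {2}m0.
    rewrite m0 /= /Rdiv Rmult_0_l Rmult_0_r !Rmult_0_l; lra.
  move=> ->; rewrite cards0 /=. apply: Rmult_le_pos; lra.
have hm : 0 < INR m by apply: lt_0_INR; apply/ltP.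
set kap := kappa U.
set iot := iota_y y.
set Y := sqnorm y.
have hkap_ge : forall j, rsum (fun a => U j a * U j a) <= kap.
  move=> j; rewrite -proj_sq //; exact: (le_bigmax (fun j => sqnorm (projS U (e_vec j)))).
have hkap : 0 < kap.
  set a0 : 'I_r := Ordinal hr.
  have h1 := hU a0 a0; rewrite eqxx in h1.
  have [j hj] : exists j, U j a0 <> 0.
    case: (classic (exists j, U j a0 <> 0)) => // hno.
    exfalso; move: h1; rewrite /rsum big1; first lra.
    move=> j _; case: (Req_dec (U j a0) 0) => [->|hne]; first ring.
    by exfalso; apply: hno; exists j.
  apply: Rlt_le_trans (hkap_ge j).
  apply: Rlt_le_trans (_ : U j a0 * U j a0 <= _).
    have : 0 < U j a0 * U j a0 by apply: Rsqr_pos_lt.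
    done.
  rewrite /rsum (bigD1 a0) //=.
  have : 0 <= \big[Rplus/0]_(i < r | i != a0) (U j i * U j i) by apply: R0_big => i _; apply: Rle_0_sqr.
  move=> h; set Q := \big[Rplus/0]_(i < r | i != a0) _ in h *. set u := U j a0 * U j a0. lra.
have hiot : 0 < iot.
  apply: Rlt_le_trans (abs_le_iota y i0); exact: Rabs_pos_lt.
have hY : 0 < Y.
  rewrite /Y /sqnorm /rsum (bigD1 i0) //=.
  have : 0 <= \big[Rplus/0]_(i < n | i != i0) (y i * y i) by apply: R0_big => i _; apply: Rle_0_sqr.
  have : 0 < y i0 * y i0 by apply: Rsqr_pos_lt.
  set Q := \big[Rplus/0]_(i < n | i != i0) _. set u := y i0 * y i0. move=> *; lra.
have Hcoh : INR r * coherence U / INR n = kap.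
  rewrite /coherence -/(kappa U) -/kap. field; lra.
set mu := vec_coherence y.
have Hmu : mu = INR n * iot ^ 2 / Y by [].
have hmu : 0 < mu.
  rewrite Hmu; apply: Rmult_lt_0_compat; last by apply: Rinv_0_lt_compat.
  apply: Rmult_lt_0_compat => //; apply: pow_lt.
  done.
set L := ln (1 / delta).
have hL : 0 < L.
  rewrite /L -ln_1; apply: ln_increasing; first lra.
  apply: (Rmult_lt_reg_l delta) => //; rewrite /Rdiv Rmult_1_l Rinv_r; lra.
have harg : 0 < 2 * mu * L by apply: Rmult_lt_0_compat => //; lra.
have hbeta : 0 < beta by apply: sqrt_lt_R0.
have hbeta2 : beta * beta = 2 * mu * L by apply: sqrt_sqrt; left.
set K := INR m / INR n * kap * Y.
have hK : 0 < K.
  rewrite /K; apply: Rmult_lt_0_compat => //; apply: Rmult_lt_0_compat => //.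
  apply: Rmult_lt_0_compat => //; by apply: Rinv_0_lt_compat.
set s := sqrt K.
have hs : 0 < s by apply: sqrt_lt_R0.
have hs2 : s * s = K by apply: sqrt_sqrt; lra.
set f := fun Om : {ffun 'I_m -> 'I_n} => sqrt (sampled_sqnorm U y Om).
have Hexf : Ex m n f <= s.
  have h1 := Ex_sq n0 f.
  have h2 : Ex m n (fun Om => f Om * f Om) = Ex m n (sampled_sqnorm U y).
    apply: Ex_ext => Om; rewrite /f sqrt_sqrt //; exact: sqnorm_ge0.
  have h3 := Ex_sampled_le m n0 hU hy.
  rewrite h2 in h1.
  have h4 : Ex m n f * Ex m n f <= s * s by rewrite hs2 /K /kap /Y; exact: Rle_trans h1 h3.
  nra.
set c := 2 * iot * sqrt kap.
have hsk : 0 < sqrt kap by apply: sqrt_lt_R0.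
have hsk2 : sqrt kap * sqrt kap = kap by apply: sqrt_sqrt; lra.
have hc : 0 < c by rewrite /c; apply: Rmult_lt_0_compat => //; lra.
have hBD : forall (k : nat) Om j j', (k < m)%N -> f (upd Om k j) - f (upd Om k j') <= c.
  by move=> k Om j j' hk; apply: BD.
set t := beta * s.
have ht : 0 < t by apply: Rmult_lt_0_compat.
set lam := 4 * t / (INR m * (c * c)).
have hlam : 0 < lam.
  rewrite /lam; apply: Rmult_lt_0_compat; first lra.
  apply: Rinv_0_lt_compat; apply: Rmult_lt_0_compat => //; nra.
have Htail := @tail m n n0 f c hc hBD lam hlam (fun Om => ~~ E Om) t.
have Hbad : forall Om, ~~ E Om -> Ex m n f + t <= f Om.
  move=> Om; rewrite /E Hcoh => /negbTE /Rleb_false h.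
  have hsm : 0 <= sampled_sqnorm U y Om by apply: sqnorm_ge0.
  have h' : ((1 + beta) * s) * ((1 + beta) * s) < sampled_sqnorm U y Om.
    have -> : (1 + beta) * s * ((1 + beta) * s) = (1 + beta) ^ 2 * (INR m / INR n) * kap * Y.
      rewrite -[(1 + beta) ^ 2]/((1 + beta) * ((1 + beta) * 1)).
      have -> : (1 + beta) * s * ((1 + beta) * s) = (1 + beta) * ((1 + beta) * 1) * (s * s) by ring.
      rewrite hs2 /K; ring.
    exact: h.
  have : (1 + beta) * s <= f Om.
    rewrite /f -(sqrt_square ((1 + beta) * s)); last nra.
    apply: sqrt_le_1_alt; lra.
  rewrite /t; lra.
have {}Htail := Htail Hbad.
apply: Rle_trans Htail _.
apply: Rmult_le_compat_l; first lra.
rewrite -exp_plus.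
have Hlc : lam * c * c * INR m = 4 * t.
  rewrite /lam; field; repeat split; apply: Rgt_not_eq; nra.
have Hex : - (lam * t) + INR m * (lam * c * (lam * c) / 8) = - (lam * t / 2).
  have -> : INR m * (lam * c * (lam * c) / 8) = lam * (lam * c * c * INR m) / 8 by field.
  rewrite Hlc; field.
have Hlt : lam * t / 2 = L.
  have ht2 : t * t = 2 * mu * L * K by rewrite /t -hs2 -hbeta2; ring.
  have -> : lam * t / 2 = 2 * (t * t) / (INR m * (c * c)) by rewrite /lam; field; repeat split; apply: Rgt_not_eq; nra.
  rewrite ht2 Hmu /K /c.
  have -> : 2 * iot * sqrt kap * (2 * iot * sqrt kap) = 4 * iot * iot * (sqrt kap * sqrt kap) by ring.
  rewrite hsk2 /=. field. repeat split; apply: Rgt_not_eq; nra.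
rewrite Hex Hlt.
have : exp (- L) * exp L = 1 by rewrite -exp_plus Rplus_opp_l exp_0.
have : exp L = 1 / delta by rewrite /L exp_ln //; apply: Rdiv_lt_0_compat; lra.
move=> -> h. right.
apply: (Rmult_eq_reg_r (1 / delta)); last by apply: Rgt_not_eq; apply: Rdiv_lt_0_compat; lra.
rewrite h /Rdiv Rmult_1_l Rinv_r //; lra.
Qed.
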